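(* Let $p$ be a prime, $n\ge1$, and let $s_1,\ldots,s_{n+1}$ be integers with $0\le s_\nu<p$ for all $\nu=1,\ldots,n+1$. If \[ \sum_{\nu=1}^n s_\nu\,\varphi(p^{\nu-1})=s_{n+1}\,p^{n-1}, \] then $s_1=s_2=\cdots=s_{n+1}$.
   Context: $\varphi$ denotes Euler's totient function (so $\varphi(p^0)=1$). *)

(* Defs.v *)
From mathcomp Require Import all_boot.

(* Main.v *)
Require Import Defs.
From mathcomp Require Import all_boot.
From mathcomp Require Import zify.

Lemma keyL (p : nat) : 1 < p -> forall m (f : nat -> nat),
  (forall k, k <= m.+1 -> f k < p) ->
  f 0 + \sum_(k < m) f k.+1 * p.-1 * p ^ k = f m.+1 * p ^ m ->
  forall k, k <= m.+1 -> f k = f 0.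
Proof.
move=> p1; elim=> [|m IH] f Hb E.
  rewrite big_ord0 addn0 expn0 muln1 in E.
  by case=> [|[|k]] //.
rewrite big_ord_recl /= in E.
set X := \sum_(i < m) _ in E.
have HX : X = p * \sum_(i < m) f i.+2 * p.-1 * p ^ i.
  rewrite /X big_distrr /=; apply: eq_bigr => i _.
  by rewrite expnS mulnCA.
have E2 : f 0 + p * (f 1 + \sum_(i < m) f i.+2 * p.-1 * p ^ i)
          = p * (f m.+2 * p ^ m) + f 1.
  rewrite HX expnS in E; move: E.
  set S := \sum_(i < m) _; set P := p ^ m; move=> E.
  have H1 : f 1 * p.-1 + f 1 = f 1 * p.
    by rewrite -{2}(muln1 (f 1)) -mulnDr addn1 prednK //; lia.
  nia.
have f01 : f 0 = f 1.
  have := congr1 (modn^~ p) E2.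
  rewrite addnC mulnC modnMDl [p * _]mulnC modnMDl !modn_small //; apply: Hb => //.
have E3 : f 0 + \sum_(i < m) f i.+2 * p.-1 * p ^ i = f m.+2 * p ^ m.
  move: E2; rewrite -f01.
  set Y := \sum_(i < m) _; set Z := f m.+2 * p ^ m => E2.
  apply/eqP; rewrite -(eqn_pmul2l (ltnW p1)); apply/eqP; lia.
pose g k := if k is k'.+1 then f k'.+2 else f 0.
have := IH g.
have Hg : forall k, k <= m.+1 -> g k < p.
  by case=> [|k] Hk /=; apply: Hb; lia.
move=> /(_ Hg E3) Hg2.
case=> [|[|k]] Hk //.
have := Hg2 k.+1 Hk; done.
Qed.

Theorem lemma3p4 (p n : nat) (s : nat -> nat) :
  prime p -> 1 <= n ->
  (forall nu, 1 <= nu <= n.+1 -> s nu < p) ->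
  \sum_(1 <= nu < n.+1) s nu * totient (p ^ nu.-1) = s n.+1 * p ^ n.-1 ->
  forall nu, 1 <= nu <= n.+1 -> s nu = s 1.
Proof.
move=> pp; case: n => [//|m] _ Hb E nu Hnu.
have p1 := prime_gt1 pp.
rewrite big_add1 /= big_nat_recl // big_mkord /= expn0 in E.
have E' : s 1 + \sum_(k < m) s k.+2 * p.-1 * p ^ k = s m.+2 * p ^ m.
  rewrite -E; congr (_ + _); first by rewrite [totient 1]/totient /= muln1.
  apply: eq_bigr => i _.
  by rewrite totient_pfactor // mulnA.
have := @keyL p p1 m (fun k => s k.+1) _ E'.
case: nu Hnu => [//|nu] Hnu; apply => //.
  by move=> k Hk; apply: Hb; lia.
Qed.
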